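(* Let $2\le k<n$ and let $A$ be an antipodal $k$-splitting of $Q_2^n$. Then $|u_1\cap u_2|\ge 2$ for all $u_1,u_2\in\beta(A)$.
   Context: $Q_2^n=\{0,1\}^n$. For $0\le m\le n$, an $m$-face of $Q_2^n$ is given by a tuple $a=(a_1,\dots,a_n)\in\{0,1,*\}^n$ with exactly $m$ entries equal to $*$; it denotes the set $\{x\in Q_2^n : x_i=a_i \text{ whenever } a_i\in\{0,1\}\}$. The direction of a face is the set of positions of its asterisks; two faces are parallel if they have the same direction, and two parallel faces $a,b$ are antipodal if $b_i=1-a_i$ at every non-asterisk position $i$. An antipodal $k$-splitting of $Q_2^n$ is a collection of exactly $2^k$ $(n-k)$-faces whose union is $Q_2^n$ and which contains no pair of parallel non-antipodal faces. For a face $a$, $\beta(a)=\{i: a_i\in\{0,1\}\}$, and $\beta(A)=\{\beta(a): a\in A\}$. *)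

(* Defs.v *)
From mathcomp Require Import all_boot.
Set Implicit Arguments. Unset Strict Implicit. Unset Printing Implicit Defensive.

Definition vertex (n : nat) := {ffun 'I_n -> bool}.
(* A face: None encodes the asterisk '*', Some b a fixed coordinate b. *)
Definition face (n : nat) := {ffun 'I_n -> option bool}.

Definition direction n (a : face n) : {set 'I_n} := [set i | a i == None].
Definition beta n (a : face n) : {set 'I_n} := [set i | a i != None].
Definition betaA n (A : {set face n}) : {set {set 'I_n}} := [set beta a | a in A].

Definition is_mface n (m : nat) (a : face n) : bool := #|direction a| == m.

Definition in_face n (x : vertex n) (a : face n) : bool :=
  [forall i, if a i is Some b then x i == b else true].

Definition parallel n (a b : face n) : bool := direction a == direction b.

Definition antipodal n (a b : face n) : bool :=
  parallel a b && [forall i, if a i is Some c then b i == Some (~~ c) else true].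

Definition antipodal_splitting n (k : nat) (A : {set face n}) : Prop :=
  [/\ #|A| = 2 ^ k,
      (forall a, a \in A -> is_mface (n - k) a),
      (forall x : vertex n, exists2 a, a \in A & in_face x a) &
      (forall a b, a \in A -> b \in A -> a != b -> parallel a b -> antipodal a b)].

(* Main.v *)
Require Import Defs.
From mathcomp Require Import all_boot.
Set Implicit Arguments. Unset Strict Implicit. Unset Printing Implicit Defensive.

Section Sec.
Variable n : nat.
Implicit Types (c : face n) (x : vertex n).

Definition fs c : {set vertex n} := [set x | in_face x c].

Lemma in_faceP x c : reflect (forall i v, c i = Some v -> x i = v) (in_face x c).
Proof.
apply: (iffP forallP) => H i.
  by move=> v E; move: (H i); rewrite E => /eqP.
by case E: (c i) => [v|] //; rewrite (H _ _ E).
Qed.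

Lemma card_fs c : #|fs c| = 2 ^ #|direction c|.
Proof.
pose F i : pred bool := if c i is Some v then pred1 v else predT.
have -> : #|fs c| = #|(family F : simpl_pred (vertex n))|.
  apply: eq_card => x; rewrite inE /in_face unfold_in /=.
  apply: eq_forallb => i; rewrite /F; case: (c i) => // v.
rewrite card_family foldrE big_map big_enum /=.
rewrite (bigID (fun i => c i == None)) /=.
rewrite [X in _ * X]big1; last by move=> i; rewrite /F; case: (c i) => // v _; rewrite card1.
rewrite muln1 /direction -prod_nat_const.
apply: eq_big => [i|i]; first by rewrite inE.
by rewrite /F => /eqP ->; rewrite card_bool.
Qed.

Definition par (U : {set 'I_n}) x := odd #|[set j in U | x j]|.
Definition flip (j : 'I_n) x : vertex n := [ffun i => if i == j then ~~ x i else x i].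

Lemma flipK j : involutive (flip j).
Proof.
move=> x; apply/ffunP => i; rewrite !ffunE; case: eqP => //= _; exact: negbK.
Qed.

Lemma par_flip (U : {set 'I_n}) (j : 'I_n) x : j \in U -> par U (flip j x) = ~~ par U x.
Proof.
move=> jS; rewrite /par.
rewrite (cardsD1 j [set i in U | x i]) (cardsD1 j [set i in U | flip j x i]).
have -> : [set i in U | flip j x i] :\ j = [set i in U | x i] :\ j.
  apply/setP => i; rewrite !inE ffunE; case: eqP => //.
rewrite !inE jS ffunE eqxx /=; case: (x j) => /=; rewrite ?negbK //.
Qed.

Lemma flip_face c j x : c j = None -> in_face (flip j x) c = in_face x c.
Proof.
move=> cj; apply: eq_forallb => i; rewrite ffunE; case: eqP => [->|//].
by rewrite cj.
Qed.

Lemma card_inv (T : finType) (f : T -> T) (D P : pred T) :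
  involutive f -> (forall t, D (f t) = D t) -> (forall t, P (f t) = ~~ P t) ->
  #|[set t | D t && P t]| = #|[set t | D t && ~~ P t]|.
Proof.
move=> fK HD HP.
have -> : [set t | D t && ~~ P t] = f @: [set t | D t && P t].
  apply/setP => y; rewrite inE; apply/idP/imsetP => [/andP[Dy Py]|[t]].
    by exists (f y); rewrite ?fK // inE HD HP Dy Py.
  by rewrite inE => /andP[Dx Px] ->; rewrite HD HP Dx Px.
by rewrite card_imset //; exact: inv_inj.
Qed.

Lemma card_sum (T : finType) (B : {set T}) : #|B| = \sum_t ((t \in B) : nat).
Proof. by rewrite -sum1_card big_mkcond; apply: eq_bigr => t _; case: (t \in B). Qed.

Lemma DC (A : {set face n}) (P : pred (vertex n)) :
  \sum_x \sum_(c in A) ((x \in fs c) && P x : nat) = \sum_(c in A) #|[set x in fs c | P x]|.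
Proof.
rewrite exchange_big /=; apply: eq_bigr => c _.
by rewrite card_sum; apply: eq_bigr => x _; rewrite !inE.
Qed.

Lemma sumA_card (A : {set face n}) x :
  \sum_(c in A) ((x \in fs c) : nat) = #|[set c in A | x \in fs c]|.
Proof.
rewrite big_mkcond card_sum /=; apply: eq_bigr => c _; rewrite !inE.
by case: (c \in A).
Qed.

Lemma card_beta c : #|beta c| = n - #|direction c|.
Proof.
have -> : beta c = ~: direction c by apply/setP => i; rewrite !inE.
by rewrite cardsCs card_ord setCK.
Qed.

Lemma partition_one k (A : {set face n}) : k <= n -> antipodal_splitting k A ->
  forall x, #|[set c in A | x \in fs c]| = 1.
Proof.
move=> kn [HA Hdim Hcov _].
have Hsum : \sum_x #|[set c in A | x \in fs c]| = \sum_(x : vertex n) 1.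
  rewrite sum1_card card_ffun card_bool card_ord.
  under eq_bigr do rewrite -sumA_card.
  transitivity (\sum_x \sum_(c in A) ((x \in fs c) && predT x : nat)).
    by apply: eq_bigr => x _; apply: eq_bigr => c _; rewrite andbT.
  rewrite DC.
  transitivity (\sum_(c in A) 2 ^ (n - k)).
    apply: eq_bigr => c cA.
    have -> : [set x in fs c | predT x] = fs c by apply/setP => x; rewrite !inE andbT.
    by rewrite card_fs (eqP (Hdim c cA)).
  by rewrite sum_nat_const HA -expnD subnKC.
have Hge x : 0 < #|[set c in A | x \in fs c]|.
  have [c cA xc] := Hcov x; apply/card_gt0P; exists c; by rewrite !inE cA xc.
have : \sum_x (#|[set c in A | x \in fs c]| - 1) + \sum_(x : vertex n) 1 = \sum_(x : vertex n) 1.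
  rewrite -big_split /= -Hsum; apply: eq_bigr => x _; by rewrite subnK // Hge.
move/eqP; rewrite -{2}[\sum_(x : vertex n) 1]add0n eqn_add2r sum_nat_eq0 => /forallP H x.
have := H x; rewrite /= subn_eq0 => le1; apply/eqP; by rewrite eqn_leq le1 Hge.
Qed.

Lemma uniq_face k (A : {set face n}) x c d : k <= n -> antipodal_splitting k A ->
  c \in A -> d \in A -> in_face x c -> in_face x d -> c = d.
Proof.
move=> kn HS cA dA xc xd.
have : #|[set c in A | x \in fs c]| <= 1 by rewrite (partition_one kn HS).
move/card_le1_eqP; apply; by rewrite !inE ?cA ?dA ?xc ?xd.
Qed.

Lemma partner k (A : {set face n}) a : 0 < k -> k <= n -> antipodal_splitting k A ->
  a \in A -> exists2 a', a' \in A & (a' != a) && (beta a' == beta a).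
Proof.
move=> k0 kn HS aA; have [HA Hdim Hcov Hant] := HS.
have Hpart := partition_one kn HS.
have cb c : c \in A -> #|beta c| = k.
  by move=> cA; rewrite card_beta (eqP (Hdim c cA)) subKn.
case: (boolP [exists c in A, (c != a) && (beta c == beta a)]) => [/exists_inP[c cA H]|/exists_inP Hn]; first by exists c.
exfalso.
set U := beta a.
have [j0 j0U] : exists j, j \in U by apply/card_gt0P; rewrite cb.
have Hcount (P : pred (vertex n)) : #|[set x | P x]| = \sum_(c in A) #|[set x in fs c | P x]|.
  rewrite -DC card_sum; apply: eq_bigr => x _; rewrite inE.
  transitivity (P x * \sum_(c in A) ((x \in fs c):nat)); first by rewrite sumA_card Hpart muln1.
  rewrite big_distrr /=; apply: eq_bigr => c _; by case: (P x); case: (x \in fs c).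
have Hall : #|[set x | par U x]| = #|[set x | ~~ par U x]|.
  exact: (card_inv (D:=predT) (P:= par U) (flipK j0) (fun _ => erefl) (fun x => par_flip x j0U)).
rewrite !Hcount (bigD1 a aA) [X in _ = X](bigD1 a aA) /= in Hall.
have Hrest : \sum_(c in A | c != a) #|[set x in fs c | par U x]| = \sum_(c in A | c != a) #|[set x in fs c | ~~ par U x]|.
  apply: eq_bigr => c /andP[cA ca].
  have nb : U != beta c.
    by apply/negP=> /eqP e; apply: Hn; exists c => //; rewrite ca -e eqxx.
  have : ~~ (U \subset beta c).
    by apply/negP => sub; move: nb; rewrite eqEcard sub /= !cb // leqnn.
  case/subsetPn => j jU jc.
  have cj : c j = None by move: jc; rewrite inE negbK => /eqP.
  have HD t : (flip j t \in fs c) = (t \in fs c) by rewrite !inE flip_face.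
  exact: (card_inv (D := fun x => x \in fs c) (P := par U) (flipK j) HD (fun x => par_flip x jU)).
rewrite Hrest in Hall; move/eqP: Hall; rewrite eqn_add2r => /eqP Ha.
have Hc x : x \in fs a -> par U x = odd #|[set j | a j == Some true]|.
  rewrite inE => /in_faceP xa; rewrite /par; apply: congr1; apply: eq_card => j.
  rewrite !inE; case E: (a j) => [v|] //=; by rewrite (xa _ _ E); case: (v) => /=.
have fa0 : 0 < #|fs a| by rewrite card_fs expn_gt0.
case p: (odd #|[set j | a j == Some true]|) in Hc.
  have e1 : [set x in fs a | par U x] = fs a by apply/setP => x; rewrite inE; case xa: (x \in fs a); rewrite ?(Hc x xa) ?inE ?xa.
  have e2 : [set x in fs a | ~~ par U x] = set0 by apply/setP => x; rewrite inE; case xa: (x \in fs a); rewrite ?(Hc x xa) ?inE ?xa.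
  by move: Ha fa0; rewrite e1 e2 cards0 => ->.
have e1 : [set x in fs a | par U x] = set0 by apply/setP => x; rewrite inE; case xa: (x \in fs a); rewrite ?(Hc x xa) ?inE ?xa.
have e2 : [set x in fs a | ~~ par U x] = fs a by apply/setP => x; rewrite inE; case xa: (x \in fs a); rewrite ?(Hc x xa) ?inE ?xa.
by move: Ha fa0; rewrite e1 e2 cards0 => <-.
Qed.
End Sec.

Lemma common n (b c : face n) :
  (forall i v w, b i = Some v -> c i = Some w -> v = w) ->
  exists x : vertex n, in_face x b && in_face x c.
Proof.
move=> H.
exists [ffun i => if b i is Some v then v else if c i is Some v then v else false].
apply/andP; split; apply/in_faceP => i v E; rewrite ffunE.
  by rewrite E.
case Eb: (b i) => [w|]; last by rewrite E.
exact: (H _ _ _ Eb E).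
Qed.

Theorem proposition18 (n k : nat) (A : {set face n}) :
  2 <= k -> k < n -> antipodal_splitting k A ->
  forall u1 u2, u1 \in betaA A -> u2 \in betaA A -> 2 <= #|u1 :&: u2|.
Proof.
move=> k2 kn HS u1 u2 /imsetP[a aA ->] /imsetP[b bA ->].
have kn' : k <= n by apply: ltnW.
have [HA Hdim Hcov Hant] := HS.
have cb c : c \in A -> #|beta c| = k.
  by move=> cA; rewrite card_beta (eqP (Hdim c cA)) subKn.
case: (eqVneq (beta a) (beta b)) => [<-|nab]; first by rewrite setIid cb.
rewrite leqNgt; apply/negP => small.
have /card_le1_eqP le1 : #|beta a :&: beta b| <= 1 by [].
have [a' a'A /andP[a'a /eqP ba']] := partner (ltnW k2) kn' HS aA.
have par' : parallel a a'.
  apply/eqP/setP => i; move/setP: ba' => /(_ i); rewrite !inE.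
  by case: (a i); case: (a' i).
have aa' : a != a' by rewrite eq_sym.
have /andP[_ /forallP anti] := Hant a a' aA a'A aa' par'.
have nb : forall c, beta c = beta a -> b != c.
  by move=> c e; apply/eqP => bc; move: nab; rewrite -e bc eqxx.
case: (boolP [exists i, (i \in beta a :&: beta b) && (a i != b i)]).
  case/existsP => i /andP[iab abi].
  have [x /andP[xb xa']] : exists x : vertex n, in_face x b && in_face x a'.
    apply: common => j v w bj a'j.
    have ja : j \in beta a by rewrite -ba' inE a'j.
    have jab : j \in beta a :&: beta b by rewrite inE ja inE bj.
    have ji := le1 _ _ jab iab; subst j.
    have ai : a i != None by move: iab; rewrite !inE => /andP[].
    move: ai abi (anti i); rewrite bj a'j; case: (a i) => [u|] //= _ nuv /eqP [->].
    by move: nuv; case: (u); case: (v).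
  by move/negP: (nb a' ba'); apply; apply/eqP; apply: (uniq_face kn' HS bA a'A xb xa').
rewrite negb_exists => /forallP H.
have [x /andP[xb xa]] : exists x : vertex n, in_face x b && in_face x a.
  apply: common => j v w bj aj.
  have jab : j \in beta a :&: beta b by rewrite !inE aj bj.
  by move: (H j); rewrite jab /= negbK aj bj => /eqP [].
by move/negP: (nb a erefl); apply; apply/eqP; apply: (uniq_face kn' HS bA aA xb xa).
Qed.
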